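(* For all real $s\ge 3$, $\log\zeta(s)\le 2^{1-s}$, where $\zeta$ is the Riemann zeta-function and $\log$ the natural logarithm. *)

(* Defs.v *)
From Stdlib Require Import Reals.
From Coquelicot Require Import Coquelicot.
Open Scope R_scope.

(* Riemann zeta function on real s > 1, via its Dirichlet series
   zeta(s) = sum_{n>=1} n^{-s}.  (Coquelicot's [Series] is total; for s > 1
   the series converges, so this is the genuine zeta value.) *)
Definition zeta (s : R) : R :=
  Series (fun n : nat => / Rpower (INR (S n)) s).

(* Main.v *)
Require Import Defs.
From Stdlib Require Import Reals Lra.
From Coquelicot Require Import Coquelicot.
Open Scope R_scope.

Lemma Rpow_pos (a b : R) : 0 < Rpower a b.
Proof. unfold Rpower; apply exp_pos. Qed.

Lemma Rpow3 (k : R) : 0 < k -> Rpower k 3 = k ^ 3.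
Proof. intro. replace 3 with (INR 3) by (simpl; lra). now apply Rpower_pow. Qed.

Lemma key (s k : R) : 3 <= s -> 2 <= k -> Rpower 2 s * k ^ 3 <= 8 * Rpower k s.
Proof.
  intros hs hk.
  replace s with (3 + (s - 3)) by ring.
  rewrite !Rpower_plus, !Rpow3 by lra.
  assert (H : Rpower 2 (s-3) <= Rpower k (s-3)) by (apply Rle_Rpower_l; lra).
  assert (0 < k^3) by (apply pow_lt; lra).
  replace (2^3) with 8 by ring.
  assert (0 < Rpower 2 (s - 3)) by apply Rpow_pos.
  nra.
Qed.

Lemma term_bound (s : R) (N : nat) : 3 <= s ->
  / Rpower (INR (S (S N))) s <=
  4 * / Rpower 2 s * (/ ((INR N + 1) * (INR N + 2)) - / ((INR N + 2) * (INR N + 3))).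
Proof.
  intros hs.
  assert (hN : 0 <= INR N) by apply pos_INR.
  assert (hk : INR (S (S N)) = INR N + 2) by (rewrite !S_INR; ring).
  rewrite hk.
  set (k := INR N + 2).
  assert (h2 := key s k hs ltac:(unfold k; lra)).
  assert (P2 := Rpow_pos 2 s). assert (Pk := Rpow_pos k s).
  replace (/ ((INR N + 1) * k) - / (k * (INR N + 3)))
    with (2 / ((k - 1) * k * (k + 1))) by (unfold k; field; repeat split; lra).
  assert (k1 : 1 < k) by (unfold k; lra).
  assert (hk3 : 0 < (k-1)*k*(k+1)) by (unfold k; apply Rmult_lt_0_compat; [apply Rmult_lt_0_compat|]; lra).
  assert (hkk : (k-1)*k*(k+1) <= k^3) by (unfold k; nra).
  apply (Rmult_le_reg_r (Rpower k s * Rpower 2 s * ((k-1)*k*(k+1)))).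
  { apply Rmult_lt_0_compat; [apply Rmult_lt_0_compat|]; lra. }
  replace (/ Rpower k s * (Rpower k s * Rpower 2 s * ((k - 1) * k * (k + 1))))
    with (Rpower 2 s * ((k - 1) * k * (k + 1))) by (field; repeat split; lra).
  replace (4 * / Rpower 2 s * (2 / ((k - 1) * k * (k + 1))) *
    (Rpower k s * Rpower 2 s * ((k - 1) * k * (k + 1)))) with (8 * Rpower k s) by (field; repeat split; lra).
  assert (Rpower 2 s * ((k-1)*k*(k+1)) <= Rpower 2 s * k^3) by (apply Rmult_le_compat_l; lra).
  lra.
Qed.

Lemma partial (s : R) (N : nat) : 3 <= s ->
  sum_n (fun n : nat => / Rpower (INR (S n)) s) N <=
  1 + 2 * / Rpower 2 s - 4 * / Rpower 2 s * / ((INR N + 1) * (INR N + 2)).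
Proof.
  intros hs. induction N as [|N IH].
  - rewrite sum_O. simpl INR. replace (0+1) with 1 by ring.
    replace (Rpower 1 s) with 1 by (unfold Rpower; rewrite ln_1, Rmult_0_r, exp_0; reflexivity).
    assert (0 < Rpower 2 s) by apply Rpow_pos. replace (1 * (0+2)) with 2 by ring. assert (4 * / Rpower 2 s * / 2 = 2 * / Rpower 2 s) by (field; lra). rewrite Rinv_1. lra.
  - rewrite sum_Sn. unfold plus; simpl (AbelianMonoid.plus _ _). change (AbelianMonoid.plus ?a ?b) with (a + b).
    pose proof (term_bound s N hs) as T.

    replace (/ ((INR (S N)+1)*(INR (S N)+2))) with (/ ((INR N + 2) * (INR N + 3)))
      by (rewrite S_INR; f_equal; ring).
    rewrite Rmult_minus_distr_l in T. lra.
Qed.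

Theorem lemma2p3 (s : R) (hs : 3 <= s) : ln (zeta s) <= Rpower 2 (1 - s).
Proof.
  set (a := fun n : nat => / Rpower (INR (S n)) s).
  set (x := / Rpower 2 s).
  assert (Px : 0 < x) by (unfold x; apply Rinv_0_lt_compat, Rpow_pos).
  assert (apos : forall n, 0 <= a n) by (intro n; unfold a; left; apply Rinv_0_lt_compat, Rpow_pos).
  assert (bnd : forall N, sum_n a N <= 1 + 2 * x).
  { intro N. pose proof (partial s N hs) as H. fold a x in H.
    assert (0 <= 4 * x * / ((INR N + 1) * (INR N + 2))).
    { pose proof (pos_INR N). apply Rmult_le_pos; [lra|].
      left; apply Rinv_0_lt_compat; nra. }
    lra. }
  assert (inc : forall N, sum_n a N <= sum_n a (S N)).
  { intro N. rewrite sum_Sn. change (plus (sum_n a N) (a (S N))) with (sum_n a N + a (S N)).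
    pose proof (apos (S N)); lra. }
  assert (ge1 : forall N, 1 <= sum_n a N).
  { induction N as [|N IH].
    - rewrite sum_O. unfold a. simpl INR.
      replace (Rpower 1 s) with 1 by (unfold Rpower; rewrite ln_1, Rmult_0_r, exp_0; reflexivity).
      rewrite Rinv_1; lra.
    - pose proof (inc N); lra. }
  destruct (ex_finite_lim_seq_incr _ _ inc bnd) as [l Hl].
  assert (Hz : zeta s = l).
  { unfold zeta, Series. fold a. rewrite (is_lim_seq_unique _ _ Hl). reflexivity. }
  assert (Hu : l <= 1 + 2 * x).
  { assert (H := is_lim_seq_le _ _ _ _ bnd Hl (is_lim_seq_const (1 + 2 * x))). exact H. }
  assert (Hd : 1 <= l).
  { assert (H := is_lim_seq_le _ _ _ _ ge1 (is_lim_seq_const 1) Hl). exact H. }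
  rewrite Hz.
  assert (E : Rpower 2 (1 - s) = 2 * x).
  { unfold Rminus. rewrite Rpower_plus, Rpower_1, Rpower_Ropp by lra. reflexivity. }
  rewrite E.
  assert (hexp : 1 + 2 * x < exp (2 * x)) by (apply exp_ineq1; lra).
  rewrite <- (ln_exp (2 * x)).
  apply ln_le; lra.
Qed.
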